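(* Let $\epsilon>0$ and let $\Delta\ge 1$ be an integer. There exists a deterministic distributed algorithm (in the synchronous port-numbering model described in the context) which, on every edge-weighted bicoloured graph of maximum degree at most $\Delta$ with positive edge weights, terminates after $T\le 4+2\Delta/\epsilon$ synchronous communication steps and outputs a matching $M$ with $w(M^* )\le (2+\epsilon)\,w(M)$, where $M^*$ is a maximum-weight matching of the graph.
   Context: A bicoloured graph is a simple undirected bipartite graph $\mathcal{G}=(R\cup B,E)$ with red nodes $R$ and blue nodes $B$ (every edge joins a red and a blue node), without isolated nodes; $\Delta$ is its maximum degree. Each edge $e$ has a positive weight $w(e)$, and for a set of edges $F$, $w(F)=\sum_{e\in F}w(e)$. A matching is a set of edges no two sharing a node; a maximum-weight matching is one of maximum total weight. The preferences of each node are determined by the weights: a node prefers heavier incident edges (the heaviest edge is most preferred). Distributed model: $\mathcal{G}$ is the communication graph. Initially each node $v$ knows only its colour, its degree $d(v)$, and $T$; $v$ has $d(v)$ ports to its neighbours, numbered according to $v$'s preference order (i.e., by decreasing weight of the incident edges). There are no node identifiers. Computation is synchronous: in each step every node receives messages from neighbours, computes deterministically, and sends a message to each neighbour. After $T$ steps each node outputs its partner (if any), consistently, defining a matching. *)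

(* Defs.v *)
From HB Require Import structures.
From mathcomp Require Import all_boot all_order all_algebra.
From mathcomp Require Import reals.
Set Implicit Arguments. Unset Strict Implicit. Unset Printing Implicit Defensive.
Import Order.TTheory GRing.Theory Num.Theory.
Local Open Scope ring_scope.

Section Graphs.
Variables (R : realType) (V : finType).

(** Bicoloured graph: node set V, colour [red] (true = red, false = blue),
    adjacency [adj], edge weights [w] (only values on edges matter). *)
Definition deg (adj : rel V) (v : V) : nat := #|[pred u | adj v u]|.

Definition bicoloured_graph (red : V -> bool) (adj : rel V) : Prop :=
  [/\ symmetric adj, irreflexive adj,
      (forall u v, adj u v -> red u != red v) &
      (forall v, exists u, adj v u) ].

Definition positive_weights (adj : rel V) (w : V -> V -> R) : Prop :=
  forall u v, adj u v -> w u v = w v u /\ 0 < w u v.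

Definition max_degree_le (adj : rel V) (Delta : nat) : Prop :=
  forall v, (deg adj v <= Delta)%N.

(** A port numbering: [port v i] is the neighbour of v reached through port i
    (for i < deg v); it is a bijection onto the neighbours of v and is ordered
    by decreasing weight (port 0 = most preferred = heaviest edge). *)
Definition valid_ports (adj : rel V) (w : V -> V -> R) (port : V -> nat -> V) : Prop :=
  [/\ (forall v i, (i < deg adj v)%N -> adj v (port v i)),
      (forall v i j, (i < deg adj v)%N -> (j < deg adj v)%N ->
                     port v i = port v j -> i = j),
      (forall v u, adj v u -> exists2 i, (i < deg adj v)%N & port v i = u) &
      (forall v i j, (i <= j)%N -> (j < deg adj v)%N ->
                     w v (port v j) <= w v (port v i)) ].

Definition pidx (adj : rel V) (port : V -> nat -> V) (v u : V) : nat :=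
  index u (mkseq (port v) (deg adj v)).

Definition is_matching (red : V -> bool) (adj : rel V) (M : {set V * V}) : Prop :=
  (forall e, e \in M -> [/\ red e.1, ~~ red e.2 & adj e.1 e.2]) /\
  (forall e f, e \in M -> f \in M -> (e.1 = f.1 \/ e.2 = f.2) -> e = f).

Definition mweight (w : V -> V -> R) (M : {set V * V}) : R :=
  \sum_(e in M) w e.1 e.2.

End Graphs.

(** A deterministic anonymous synchronous algorithm in the port-numbering
    model.  [a_init T c d]: initial state of a node knowing T, its colour c and
    its degree d.  In each step a node in state s sends [a_send s i] on its
    port i, and then moves to [a_recv s m] where [m i] is the message received
    on its port i.  After the last step it outputs [a_out s] : the port number
    of its partner, or None. *)
Record algorithm := Algorithm {
  St : Type;
  Msg : Type;
  a_init : nat -> bool -> nat -> St;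
  a_send : St -> nat -> Msg;
  a_recv : St -> (nat -> Msg) -> St;
  a_out : St -> option nat }.

Section Run.
Variables (A : algorithm) (T : nat) (V : finType)
          (red : V -> bool) (adj : rel V) (port : V -> nat -> V).

Fixpoint state (t : nat) (v : V) : St A :=
  match t with
  | 0 => @a_init A T (red v) (deg adj v)
  | t'.+1 =>
      @a_recv A (state t' v)
        (fun i => let u := port v i in @a_send A (state t' u) (pidx adj port u v))
  end.

Definition output (v : V) : option nat := @a_out A (state T v).

Definition consistent_output : Prop :=
  forall v i, output v = Some i ->
    (i < deg adj v)%N /\ output (port v i) = Some (pidx adj port (port v i) v).

Definition output_matching : {set V * V} :=
  [set e : V * V | red e.1 &&
     (if output e.1 is Some i then port e.1 i == e.2 else false)].

End Run.

(* Main.v *)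
Require Import Defs.
From HB Require Import structures.
From mathcomp Require Import all_boot all_order all_algebra.
From mathcomp Require Import reals.
From mathcomp Require Import lra.
Import Order.TTheory GRing.Theory Num.Theory.
Local Open Scope ring_scope.
Set Implicit Arguments. Unset Strict Implicit. Unset Printing Implicit Defensive.

Record st := St' { isr : bool; dg : nat; cnt : nat; ptr : nat; acc : bool; hold : option nat }.

Definition firstj (d : nat) (p : nat -> bool) : option nat :=
  let j := find p (iota 0 d) in if (j < d)%N then Some j else None.

Definition a_init' (_ : nat) (c : bool) (d : nat) : st := St' c d 0 0 false None.
Definition a_send' (s : st) (i : nat) : bool * bool := (i == ptr s, hold s == Some i).
Definition a_recv' (s : st) (m : nat -> bool * bool) : st :=
  if isr s then
    if odd (cnt s) then
      let a := (ptr s < dg s)%N && (m (ptr s)).2 in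
      St' (isr s) (dg s) (cnt s).+1
          (if a then ptr s else if (ptr s < dg s)%N then (ptr s).+1 else ptr s) a (hold s)
    else St' (isr s) (dg s) (cnt s).+1 (ptr s) (acc s) (hold s)
  else
    if odd (cnt s) then St' (isr s) (dg s) (cnt s).+1 (ptr s) (acc s) (hold s)
    else St' (isr s) (dg s) (cnt s).+1 (ptr s) (acc s) (firstj (dg s) (fun j => (m j).1)).
Definition a_out' (s : st) : option nat :=
  if isr s then (if acc s then Some (ptr s) else None) else hold s.

Definition alg : algorithm := Algorithm a_init' a_send' a_recv' a_out'.

Lemma firstjS d (p : nat -> bool) j : firstj d p = Some j -> (j < d)%N /\ p j.
Proof.
rewrite /firstj; case: ifP => // lt [<-]; split => //.
have hs : has p (iota 0 d) by rewrite has_find size_iota.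
by have := nth_find 0 hs; rewrite nth_iota.
Qed.

Lemma firstjL d (p : nat -> bool) j0 : p j0 -> (j0 < d)%N -> exists2 j, firstj d p = Some j & (j <= j0)%N.
Proof.
move=> pj lt; rewrite /firstj.
have le : (find p (iota 0 d) <= j0)%N.
  rewrite leqNgt; apply/negP => /(before_find 0); by rewrite nth_iota // add0n pj.
rewrite (leq_ltn_trans le lt); by exists (find p (iota 0 d)).
Qed.

Section Proof.
Variables (R : realType) (V : finType) (red : V -> bool) (adj : rel V)
  (w : V -> V -> R) (port : V -> nat -> V) (Tn : nat).
Hypotheses (Hbg : bicoloured_graph red adj) (Hw : positive_weights adj w)
  (Hp : valid_ports adj w port).

Local Notation d := (deg adj).
Local Notation pix := (pidx adj port).

Lemma adjS u v : adj u v -> adj v u.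
Proof. by case: Hbg => sym _ _ _; rewrite sym. Qed.

Lemma adj_col u v : adj u v -> red u != red v.
Proof. by case: Hbg => _ _ h _; apply: h. Qed.

Lemma PL1 v i : (i < d v)%N -> adj v (port v i).
Proof. by case: Hp => h _ _ _; apply: h. Qed.

Lemma PL2 v u : adj v u -> (pix v u < d v)%N /\ port v (pix v u) = u.
Proof.
case: Hp => _ _ h _ /h [i lt <-].
have mem : port v i \in mkseq (port v) (d v).
  by apply/mapP; exists i => //; rewrite mem_iota.
have im : (index (port v i) (mkseq (port v) (d v)) < d v)%N.
  by have := index_mem (port v i) (mkseq (port v) (d v)); rewrite size_mkseq mem.
rewrite /pidx; split => //.
by have := nth_index (port v i) mem; rewrite nth_mkseq.
Qed.

Lemma PL3 v i : (i < d v)%N -> pix v (port v i) = i.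
Proof.
move=> lt; have [lt2 e] := PL2 (PL1 lt).
by case: Hp => _ h _ _; exact: h lt2 lt e.
Qed.

Lemma PL4 v i j : (i <= j)%N -> (j < d v)%N -> w v (port v j) <= w v (port v i).
Proof. by case: Hp => _ _ _ h; apply: h. Qed.

Lemma wsym u v : adj u v -> w u v = w v u.
Proof. by move/Hw => []. Qed.

Lemma wpos u v : adj u v -> 0 < w u v.
Proof. by move/Hw => []. Qed.

Lemma sum_ports (f : V -> R) v :
  \sum_(j < d v) f (port v j) = \sum_(u | adj v u) f u.
Proof.
have uq : uniq (mkseq (port v) (d v)).
  rewrite map_inj_in_uniq ?iota_uniq // => i j; rewrite !mem_iota !add0n.
  by case: Hp => _ h _ _ /= /h; apply.
rewrite -(big_mkord xpredT (fun j => f (port v j))) /index_iota subn0.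
rewrite -(big_map (port v) xpredT f) (big_uniq _ uq) /=; apply: eq_bigl => u.
apply/idP/idP.
  by move/mapP => [i]; rewrite mem_iota add0n => /PL1 ? ->.
move=> /PL2 [lt <-]; apply/mapP; exists (pix v u) => //; by rewrite mem_iota.
Qed.

Definition S t v := state alg Tn red adj port t v.

Lemma S_succ t v : S t.+1 v =
  a_recv' (S t v) (fun i => a_send' (S t (port v i)) (pix (port v i) v)).
Proof. by []. Qed.
Arguments S : simpl never.

Lemma S_basic t v : [/\ isr (S t v) = red v, dg (S t v) = d v & cnt (S t v) = t].
Proof.
elim: t => [|t [h1 h2 h3]] //; rewrite S_succ /a_recv'.
by case E: (isr (S t v)); case: (odd _) => /=; split; rewrite -?h1 ?h2 ?h3 ?E.
Qed.

Lemma S_isr t v : isr (S t v) = red v. Proof. by case: (S_basic t v). Qed.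
Lemma S_dg t v : dg (S t v) = d v. Proof. by case: (S_basic t v). Qed.
Lemma S_cnt t v : cnt (S t v) = t. Proof. by case: (S_basic t v). Qed.

Lemma S_hold_red t v : red v -> hold (S t v) = None.
Proof.
move=> rv; elim: t => [|t IH] //; rewrite S_succ /a_recv' S_isr rv.
by case: (odd _).
Qed.

Definition P i v := ptr (S i.*2 v).
Definition H i v := hold (S i.*2 v).
Definition Acc i v := acc (S i.*2 v).
Arguments P : simpl never.
Arguments H : simpl never.
Arguments Acc : simpl never.

Lemma odd_red i r : red r ->
  S i.*2.+1 r = St' true (d r) i.*2.+1 (P i r) (Acc i r) (H i r).
Proof. by move=> rr; rewrite S_succ /a_recv' S_isr rr S_cnt odd_double S_dg. Qed.

Lemma odd_blue i b : ~~ red b ->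
  hold (S i.*2.+1 b) = firstj (d b) (fun j => pix (port b j) b == P i (port b j)).
Proof. by move=> /negbTE rb; rewrite S_succ /a_recv' S_isr rb S_cnt odd_double S_dg. Qed.

Lemma even_blue i b : ~~ red b -> H i.+1 b = hold (S i.*2.+1 b).
Proof.
move=> /negbTE rb; rewrite /H doubleS S_succ /a_recv' S_isr rb S_cnt /=.
by rewrite odd_double.
Qed.

Lemma H_blue i b : ~~ red b ->
  H i.+1 b = firstj (d b) (fun j => pix (port b j) b == P i (port b j)).
Proof. by move=> rb; rewrite even_blue // odd_blue. Qed.

Definition accd i r := (P i r < d r)%N &&
   (H i.+1 (port r (P i r)) == Some (pix (port r (P i r)) r)).

Lemma hold_odd i v : hold (S i.*2.+1 v) = H i.+1 v.
Proof.
case rv: (red v); last by rewrite even_blue ?rv.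
by rewrite /H !S_hold_red.
Qed.

Lemma red_step i r : red r ->
  [/\ P i.+1 r = (if accd i r then P i r else if (P i r < d r)%N then (P i r).+1 else P i r),
      Acc i.+1 r = accd i r & H i.+1 r = None].
Proof.
move=> rr; split; last by rewrite /H S_hold_red.
- by rewrite /P doubleS [S i.*2.+2 r]S_succ odd_red //= /accd /a_send' /a_recv' /= odd_double /= hold_odd.
- by rewrite /Acc doubleS [S i.*2.+2 r]S_succ odd_red //= /accd /a_send' /a_recv' /= odd_double /= hold_odd.
Qed.

Lemma P0 v : P 0 v = 0%N. Proof. by []. Qed.
Lemma H0 v : H 0 v = None. Proof. by []. Qed.
Lemma Acc0 v : Acc 0 v = false. Proof. by []. Qed.

Lemma red_adj u v : red u -> adj u v -> ~~ red v.
Proof. by move=> ru /adj_col; rewrite ru. Qed.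
Lemma blue_adj u v : ~~ red u -> adj u v -> red v.
Proof. by move=> /negbTE ru /adj_col; rewrite ru; case: (red v). Qed.

Lemma H_red i v : red v -> H i v = None.
Proof. by move=> rv; rewrite /H S_hold_red. Qed.

Lemma H_inv i b j : H i b = Some j ->
  (j < d b)%N /\ P i (port b j) = pix (port b j) b.
Proof.
case: i => [|i] //.
case rb: (red b); first by rewrite H_red.
move=> Hb; move: (Hb); rewrite H_blue ?rb // => /firstjS [jd /eqP e].
set u := port b j in e *.
have abu : adj b u by apply: PL1.
have aub := adjS abu.
have ru : red u by apply: (blue_adj (negbT rb) abu).
split => //.
have [-> _ _] := red_step i ru.
have [lt pe] := PL2 aub.
have -> // : accd i u.
by rewrite /accd -e lt /= pe Hb /u PL3.
Qed.

Lemma H_prop i b j : H i.+1 b = Some j -> pix (port b j) b = P i (port b j).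
Proof.
case rb: (red b); first by rewrite H_red.
by rewrite H_blue ?rb // => /firstjS [jd /eqP e].
Qed.

Lemma P_step i r : red r -> (P i r <= P i.+1 r <= (P i r).+1)%N.
Proof.
move=> rr; have [-> _ _] := red_step i rr.
case: (accd i r); rewrite ?leqnn ?leqnSn //.
by case: ifP => _; rewrite ?leqnn ?leqnSn.
Qed.

Lemma P_le i r : red r -> (P i r <= d r)%N.
Proof.
move=> rr; elim: i => [|i IH] //; have [-> _ _] := red_step i rr.
by case: (accd i r) => //; case: ifP.
Qed.

Lemma accE i r : red r ->
  Acc i r = (P i r < d r)%N && (H i (port r (P i r)) == Some (pix (port r (P i r)) r)).
Proof.
move=> rr; case: i => [|i]; first by rewrite Acc0 H0 andbF.
have [eP -> _] := red_step i rr.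
case ac: (accd i r); first by rewrite eP ac.
rewrite eP ac; case: ifP => lt //.
case lt2: ((P i r).+1 < d r)%N => //; rewrite andTb.
case E: (H _ _ == _) => //; move/eqP: E => /H_prop.
have ab : adj r (port r (P i r).+1) by apply: PL1.
have [_ ->] := PL2 (adjS ab).
rewrite PL3 // => e; case: (n_Sn (P i r)); by rewrite e.
Qed.

Definition h i v : R := if H i v is Some j then w v (port v j) else 0.

Lemma h_ge0 i v : 0 <= h i v.
Proof.
rewrite /h; case E: (H i v) => [j|] //.
by have [jd _] := H_inv E; apply/ltW/wpos/PL1.
Qed.

Lemma h_cand i b j0 : ~~ red b -> (j0 < d b)%N ->
  pix (port b j0) b = P i (port b j0) -> w b (port b j0) <= h i.+1 b.
Proof.
move=> rb lt e; rewrite /h H_blue //.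
have [j -> le] := firstjL (p := fun j => pix (port b j) b == P i (port b j)) (introT eqP e) lt.
exact: PL4.
Qed.

Lemma h_mono i v : h i v <= h i.+1 v.
Proof.
rewrite {1}/h; case E: (H i v) => [j|]; last exact: h_ge0.
have rv : ~~ red v by apply/negP => rv; rewrite H_red in E.
have [jd e] := H_inv E.
exact: h_cand.
Qed.

Lemma Q i r b : red r -> adj r b -> (pix r b < P i r)%N -> w r b <= h i b.
Proof.
move=> rr arb; elim: i => [|i IH]; first by rewrite P0.
move=> lt; have /andP [l1 l2] := P_step i rr.
have : (pix r b <= P i r)%N by rewrite -ltnS (leq_trans lt l2).
rewrite leq_eqVlt => /orP [/eqP e|lt2]; last exact: (le_trans (IH lt2) (h_mono i b)).
have [lt3 pe] := PL2 (adjS arb).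
rewrite wsym //; have := h_cand (i:=i) (red_adj rr arb) lt3; rewrite pe; apply.
by rewrite e.
Qed.

Lemma bij i r b : (red r && Acc i r && (port r (P i r) == b)) =
  (if H i b is Some j then port b j == r else false).
Proof.
apply/idP/idP.
  case/andP => /andP [rr]; rewrite accE // => /andP [lt /eqP Hb] /eqP e.
  rewrite -e Hb; have [_ ->] := PL2 (adjS (PL1 lt)); by [].
case E: (H i b) => [j|] // /eqP e.
have rb : ~~ red b by apply/negP => rb; rewrite H_red in E.
have [jd pe] := H_inv E.
have abr : adj b r by rewrite -e; apply: PL1.
have rr : red r by apply: (blue_adj rb abr).
have [lt pp] := PL2 (adjS abr).
have pr : P i r = pix r b by rewrite -e.
have pj : pix b r = j by rewrite -e PL3.
by rewrite rr accE // pr lt pp E pj !eqxx.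
Qed.

Lemma sum_ind (x : V) (F : V -> R) : \sum_b (if x == b then F b else 0) = F x.
Proof. by rewrite -big_mkcond (big_pred1 x) // => b; rewrite /= eq_sym. Qed.

Definition Cd i := \sum_r \sum_b
  (if red r && Acc i r && (port r (P i r) == b) then w r b else 0).

Definition hs i := \sum_v h i v.

Lemma Cd_hs i : Cd i = hs i.
Proof.
rewrite /Cd exchange_big /hs; apply: eq_bigr => b _.
under eq_bigr => r _ do rewrite bij.
rewrite /h; case E: (H i b) => [j|]; last by rewrite big1.
have jd : (j < d b)%N by case: (H_inv E).
by rewrite sum_ind wsym //; apply: adjS; apply: PL1.
Qed.

Definition c i r := if Acc i r then w r (port r (P i r)) else 0.
Definition a i r := if (P i r < d r)%N then w r (port r (P i r)) else 0.

Lemma Cd_c i : Cd i = \sum_(r | red r) c i r.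
Proof.
rewrite /Cd [in RHS]big_mkcond /=; apply: eq_bigr => r _.
case: (red r); last by rewrite big1.
by rewrite /c; case: (Acc i r); [rewrite /= sum_ind | rewrite big1].
Qed.

Lemma a_ge0 i r : 0 <= a i r.
Proof. by rewrite /a; case: ifP => // lt; apply/ltW/wpos/PL1. Qed.

Lemma c_a i r : red r -> c i r = if Acc i r then a i r else 0.
Proof.
move=> rr; rewrite /c /a; case E: (Acc i r) => //.
by move: E; rewrite accE // => /andP [->].
Qed.

Lemma a_mono i r : red r -> a i.+1 r <= a i r.
Proof.
move=> rr; rewrite {1}/a; case: ifP => lt; last exact: a_ge0.
have /andP [l1 l2] := P_step i rr.
rewrite /a (leq_ltn_trans l1 lt); exact: PL4.
Qed.

Definition phi i r := \sum_(0 <= j < P i r) h i (port r j).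

Lemma sum_widen (f g : nat -> R) m n : (m <= n)%N -> (forall j, f j <= g j) ->
  (forall j, 0 <= g j) -> \sum_(0 <= j < m) f j <= \sum_(0 <= j < n) g j.
Proof.
move=> mn fg g0; rewrite (@big_cat_nat _ _ _ m 0 n) //=.
rewrite -[X in X <= _]addr0; apply: lerD; first by apply: ler_sum => j _.
by apply: sumr_ge0 => j _.
Qed.

Lemma phi_ge0 i r : 0 <= phi i r.
Proof. by apply: sumr_ge0 => j _; apply: h_ge0. Qed.

Lemma phi_step i r : red r -> phi i r + (a i.+1 r - c i.+1 r) <= phi i.+1 r.
Proof.
move=> rr; rewrite c_a //; have [eP eA _] := red_step i rr; rewrite eA.
have mono m n : (m <= n)%N ->
    \sum_(0 <= j < m) h i (port r j) <= \sum_(0 <= j < n) h i.+1 (port r j).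
  by move=> mn; apply: sum_widen => // j; [apply: h_mono | apply: h_ge0].
case ac: (accd i r).
  by rewrite subrr addr0 /phi eP ac; apply: mono.
rewrite subr0.
case lt: (P i r < d r)%N; last first.
  by rewrite /a eP ac /= lt /= lt addr0 /phi eP ac /= lt; apply: mono.
rewrite /phi eP ac /= lt big_nat_recr //=; apply: lerD; first exact: mono.
have ab : adj r (port r (P i r)) by apply: PL1.
apply: (@le_trans _ _ (w r (port r (P i r)))).
  rewrite /a eP ac /= lt; case: ifP => lt2; first by apply: PL4.
  exact/ltW/wpos.
apply: Q => //; rewrite PL3 // eP ac /= lt; exact: ltnSn.
Qed.

Definition A i := \sum_(r | red r) a i r.
Definition Phi i := \sum_(r | red r) phi i r.

Lemma pot i : i%:R * (A i - hs i) <= Phi i.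
Proof.
elim: i => [|i IH]; first by rewrite mul0r; apply: sumr_ge0 => r _; apply: phi_ge0.
rewrite -natr1 mulrDl mul1r.
apply: (@le_trans _ _ (Phi i + (A i.+1 - hs i.+1))).
  apply: lerD => //; apply: le_trans IH; apply: ler_wpM2l; first exact: ler0n.
  apply: lerB; first by apply: ler_sum => r rr; apply: a_mono.
  by apply: ler_sum => v _; apply: h_mono.
rewrite -Cd_hs Cd_c /A /Phi -sumrB -big_split /=.
by apply: ler_sum => r rr; apply: phi_step.
Qed.

Lemma Phi_bound i (D : nat) : max_degree_le adj D -> Phi i <= D%:R * hs i.
Proof.
move=> Hd.
apply: (@le_trans _ _ (\sum_r \sum_(u | adj r u) h i u)).
  rewrite /Phi [in X in X <= _]big_mkcond /=; apply: ler_sum => r _.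
  case: ifP => rr; last by apply: sumr_ge0 => u _; apply: h_ge0.
  rewrite -sum_ports -(big_mkord xpredT (fun j => h i (port r j))).
  apply: sum_widen; [exact: (P_le _ rr) | by [] | move=> j; exact: h_ge0].
rewrite (@exchange_big_dep _ _ _ _ _ _ _ _ _ xpredT) //= /hs mulr_sumr; apply: ler_sum => u _.
have -> : \sum_(r | true && adj r u) h i u = h i u *+ d u.
  rewrite -sumr_const /deg; apply: congr_big => // r.
  by rewrite /= !inE; apply/idP/idP => /adjS.
rewrite -[h i u *+ d u]mulr_natl; apply: ler_wpM2r; first exact: h_ge0.
by rewrite ler_nat.
Qed.

Lemma sub_sum (X : {set V}) (pr : pred V) (f : V -> R) :
  (forall v, v \in X -> pr v) -> (forall v, 0 <= f v) ->
  \sum_(v in X) f v <= \sum_(v | pr v) f v.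
Proof.
move=> sub f0; rewrite big_mkcond [in X in _ <= X]big_mkcond /=.
apply: ler_sum => v _; case: ifP => vX; first by rewrite sub.
by case: ifP.
Qed.

Lemma Mstar_bound k (M : {set V * V}) : is_matching red adj M ->
  mweight w M <= A k + hs k.
Proof.
move=> [Me Mi].
apply: (@le_trans _ _ (\sum_(e in M) (a k e.1 + h k e.2))).
  apply: ler_sum => e eM; have [re1 re2 ae] := Me e eM.
  case lt: (pix e.1 e.2 < P k e.1)%N.
    by rewrite -[w _ _]add0r; apply: lerD; [apply: a_ge0 | apply: Q].
  rewrite -[w _ _]addr0; apply: lerD; last exact: h_ge0.
  have [lt2 pe] := PL2 ae.
  have le : (P k e.1 <= pix e.1 e.2)%N by rewrite leqNgt lt.
  by rewrite /a (leq_ltn_trans le lt2) -{1}pe; apply: PL4.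
rewrite big_split /=; apply: lerD.
  rewrite -(big_imset (fun r => a k r) (h := fst)); last first.
    by move=> e f eM fM ef; apply: Mi => //; left.
  apply: sub_sum; last exact: a_ge0.
  by move=> r /imsetP [e eM ->]; case: (Me e eM).
rewrite -(big_imset (fun b => h k b) (h := snd)); last first.
  by move=> e f eM fM ef; apply: Mi => //; right.
by apply: sub_sum => //; exact: h_ge0.
Qed.

Variable k : nat.
Hypothesis HT : Tn = k.*2.

Lemma outE v : output alg Tn red adj port v =
  if red v then (if Acc k v then Some (P k v) else None) else H k v.
Proof.
by rewrite /output -/(S Tn v) /= /a_out' S_isr HT.
Qed.

Lemma consistent : consistent_output alg Tn red adj port.
Proof.
move=> v i; rewrite outE; case rv: (red v).
  case ac: (Acc k v) => // -[<-]; move: ac; rewrite accE // => /andP [lt /eqP Hb].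
  split => //; rewrite outE.
  have ab := PL1 lt; by rewrite (negbTE (red_adj rv ab)).
move=> Hv; have [jd pe] := H_inv Hv; split => //.
set u := port v i in pe *.
have avu : adj v u by apply: PL1.
have ru : red u by apply: (blue_adj (negbT rv) avu).
have [lt pp] := PL2 (adjS avu).
rewrite outE ru accE // pe lt pp Hv /u PL3 //.
by rewrite eqxx.
Qed.

Lemma OM_mem e : (e \in output_matching alg Tn red adj port) =
  [&& red e.1, Acc k e.1 & port e.1 (P k e.1) == e.2].
Proof.
rewrite /output_matching inE outE; case: (red e.1) => //=.
by case: (Acc k e.1).
Qed.

Lemma OM_matching : is_matching red adj (output_matching alg Tn red adj port).
Proof.
split.
  move=> e; rewrite OM_mem => /and3P [re ac /eqP pe].
  move: ac; rewrite accE // => /andP [lt _].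
  have ab := PL1 lt; rewrite pe in ab.
  by split => //; apply: red_adj ab.
move=> e f; rewrite !OM_mem => /and3P [re ae /eqP pe] /and3P [rf af /eqP pf].
move: ae af; rewrite !accE // => /andP [lte /eqP He] /andP [ltf /eqP Hf].
case: e f re lte He pe rf ltf Hf pf => [e1 e2] [f1 f2] /= re lte He pe rf ltf Hf pf.
case=> [e11|e22].
  by rewrite -pe -pf e11.
subst e2 f2; rewrite e22 in He.
rewrite He in Hf; case: Hf => pp.
have [_ q1] := PL2 (adjS (PL1 lte)).
have [_ q2] := PL2 (adjS (PL1 ltf)).
by rewrite -q1 e22 pp q2 -e22.
Qed.

Lemma OM_weight : mweight w (output_matching alg Tn red adj port) = hs k.
Proof.
rewrite -Cd_hs /Cd /mweight pair_big /= big_mkcond /=; apply: eq_bigr => e _.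
by rewrite OM_mem andbA.
Qed.
End Proof.
Theorem theorem2 (R : realType) (eps : R) (Delta : nat) :
  0 < eps -> (1 <= Delta)%N ->
  exists (A : algorithm) (T : nat),
    (T%:R <= 4 + 2 * Delta%:R / eps :> R) /\
    forall (V : finType) (red : V -> bool) (adj : rel V) (w : V -> V -> R)
           (port : V -> nat -> V),
      bicoloured_graph red adj ->
      positive_weights adj w ->
      max_degree_le adj Delta ->
      valid_ports adj w port ->
      [/\ consistent_output A T red adj port,
          is_matching red adj (output_matching A T red adj port) &
          forall Mstar : {set V * V}, is_matching red adj Mstar ->
            mweight w Mstar <= (2 + eps) * mweight w (output_matching A T red adj port)].
Proof.
move=> ep D1.
set x := Delta%:R / eps.
have x0 : 0 <= x by rewrite /x divr_ge0 // ltW.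
have /andP [tl tu] := truncn_itv x0.
set k := (Num.truncn x).+1.
have k0 : (0 : R) < k%:R by rewrite ltr0n.
have Dk : Delta%:R <= eps * k%:R.
  by rewrite -ler_pdivrMl // mulrC; apply: ltW.
exists alg, k.*2; split.
  rewrite -muln2 natrM /k -natr1 mulrDl mul1r.
  apply: (@le_trans _ _ (x * 2 + 2)); first by apply: lerD => //; apply: ler_wpM2r.
  rewrite -mulrA -/x; lra.
move=> V red adj w port Hbg Hw Hd Hp.
split.
  - exact: (consistent Hbg Hp (Tn:=k.*2) (k:=k) erefl).
  - exact: (OM_matching Hbg Hp (Tn:=k.*2) (k:=k) erefl).
move=> M HM; rewrite (OM_weight Hbg Hw Hp (Tn:=k.*2) (k:=k) erefl).
apply: le_trans (Mstar_bound k.*2 Hbg Hw Hp k HM) _.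
have hs0 : 0 <= hs red adj w port k.*2 k by apply: sumr_ge0 => v _; apply: (h_ge0 k.*2 Hbg Hw Hp).
have := le_trans (pot k.*2 Hbg Hw Hp k) (Phi_bound k.*2 Hbg Hw Hp k Hd).
set Av := A _ _ _ _ _ _; set hv := hs _ _ _ _ _ _ => pk.
have : k%:R * (Av - hv) <= k%:R * (eps * hv).
  apply: le_trans pk _; rewrite mulrA [k%:R * eps]mulrC; apply: ler_wpM2r => //.
rewrite ler_pM2l // => le.
lra.
Qed.
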